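(* Let $b \le 0$, let $\tau \ge 0$ be finite, and let $x_0 \ge 0$. Let $x(t)$ be the solution of the delay differential equation $$\frac{dx(t)}{dt} = x(t) - x^2(t)\exp\{-b\,x(t-\tau)\} \qquad (t>0)$$ with constant history $x(t) = x_0$ for $t \le 0$. Then $x(t)$ is bounded for all $t \ge 0$. Moreover, if $b < 0$, there exists a time $t_0 = t_0(x_0,\tau)$ such that $$0 \le x(t) \le 1 \qquad \text{for all } t \ge t_0.$$
   Context: This is the evolution equation $\frac{dx}{dt} = \sigma_1 x - \sigma_2 x^2 \exp\{-b x(t-\tau)\}$ for a dimensionless population $x(t)$ with nonlinear delayed carrying capacity $y = \exp\{b x(t-\tau)\}$, specialized to the case $\sigma_1 = \sigma_2 = 1$ (''gain and competition''); $b$ is the production parameter and $\tau$ the time delay. *)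

(* Defs.v *)
From Stdlib Require Import Reals.
Open Scope R_scope.

Definition dde_rhs (b tau : R) (x : R -> R) (t : R) : R :=
  x t - (x t) ^ 2 * exp (- b * x (t - tau)).

Definition is_dde_solution (b tau x0 : R) (x : R -> R) : Prop :=
  (forall t, t <= 0 -> x t = x0) /\
  (forall t, continuity_pt x t) /\
  (forall t, 0 < t -> derivable_pt_lim x t (dde_rhs b tau x t)).

(* Main.v *)
Require Import Defs.
From Stdlib Require Import Reals.
From Stdlib Require Import Lra Psatz Classical.
Open Scope R_scope.

Lemma exp_mono (u v : R) : u <= v -> exp u <= exp v.
Proof.
  intros H; destruct (Rle_lt_or_eq_dec _ _ H) as [H'|H'].
  - left; apply exp_increasing; exact H'.
  - subst; lra.
Qed.

Lemma dexpK (K s : R) :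
  derivable_pt_lim (fun s => exp (- K * s)) s (- K * exp (- K * s)).
Proof.
  assert (H1 : derivable_pt_lim (mult_real_fct (-K) id) s (-K * 1)).
  { apply derivable_pt_lim_scal; apply derivable_pt_lim_id. }
  pose proof (derivable_pt_lim_comp _ exp s _ _ H1 (derivable_pt_lim_exp _)) as H2.
  unfold comp, mult_real_fct, id in H2.
  replace (- K * exp (- K * s)) with (exp (- K * s) * (- K * 1)) by ring.
  exact H2.
Qed.

Lemma cont_of_der (f : R -> R) (s l : R) :
  derivable_pt_lim f s l -> continuity_pt f s.
Proof.
  intros H. apply derivable_continuous_pt. exists l. exact H.
Qed.

Lemma barrier (h : R -> R) (a c : R) :
  a <= c ->
  (forall t, a <= t <= c -> continuity_pt h t) ->
  0 <= h a ->
  (forall t, a < t <= c -> h t < 0 -> exists d, 0 < d /\ derivable_pt_lim h t d) ->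
  0 <= h c.
Proof.
  intros Hac Hc Ha Hd.
  destruct (continuity_ab_min h a c Hac Hc) as [m [Hmin Hm]].
  destruct (Rle_or_lt 0 (h c)) as [?|Hneg]; [assumption|exfalso].
  assert (hm : h m < 0) by (specialize (Hmin c); lra).
  assert (Ham : a < m) by (destruct (Rle_lt_or_eq_dec a m (proj1 Hm)); [assumption| subst; lra]).
  destruct (Hd m (conj Ham (proj2 Hm)) hm) as [d [Hdpos Hder]].
  destruct (Hder (d/2) ltac:(lra)) as [del Hdel].
  pose (hh := - Rmin (del/2) ((m-a)/2)).
  assert (Hdp := cond_pos del).
  assert (H1 : Rmin (del/2) ((m-a)/2) <= del/2) by apply Rmin_l.
  assert (H2 : Rmin (del/2) ((m-a)/2) <= (m-a)/2) by apply Rmin_r.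
  assert (H3 : 0 < Rmin (del/2) ((m-a)/2)) by (apply Rmin_glb_lt; lra).
  assert (hhneg : hh < 0) by (unfold hh; lra).
  assert (Habs : Rabs hh < del) by (rewrite Rabs_left; unfold hh; lra).
  specialize (Hdel hh ltac:(lra) Habs).
  set (q := (h (m + hh) - h m) / hh) in Hdel.
  assert (Hq : h (m + hh) - h m = q * hh) by (unfold q; field; lra).
  assert (Hq2 : q > d/2).
  { apply Rabs_def2 in Hdel. lra. }
  assert (Hmin' : h m <= h (m + hh)) by (apply Hmin; unfold hh; lra).
  nra.
Qed.

Lemma nonneg (b tau x0 : R) (x : R -> R)
  (hb : b <= 0) (htau : 0 <= tau) (hx0 : 0 <= x0)
  (hsol : is_dde_solution b tau x0 x) : forall t, 0 <= x t.
Proof.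
  destruct hsol as [Hh [Hc Hd]].
  intros t1. destruct (Rle_or_lt t1 0) as [Ht|Ht]; [rewrite Hh; lra|].
  destruct (continuity_ab_maj x (-tau) t1 ltac:(lra) (fun c _ => Hc c)) as [Mx [HM _]].
  destruct (continuity_ab_min x (-tau) t1 ltac:(lra) (fun c _ => Hc c)) as [mn [Hm _]].
  set (Ahi := x Mx) in *. set (Alo := x mn) in *.
  set (A2 := Rabs Alo). set (e := exp (- b * Ahi)).
  assert (He : 0 < e) by apply exp_pos.
  assert (HA2 : 0 <= A2) by apply Rabs_pos.
  set (K := 2 + A2 * e).
  pose (h := fun s => x s * exp (- K * s)).
  assert (Hb := barrier h 0 t1 ltac:(lra)).
  assert (HE1 := exp_pos (- K * t1)).
  cut (0 <= h t1). { unfold h. intros H. nra. }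
  apply Hb.
  - intros t _. apply continuity_pt_mult; [apply Hc| eapply cont_of_der; apply dexpK].
  - unfold h. rewrite Hh by lra. assert (H := exp_pos (-K*0)). nra.
  - intros s Hs Hneg.
    assert (Hes := exp_pos (- K * s)).
    assert (xneg : x s < 0) by (unfold h in Hneg; nra).
    eexists; split; [|apply (derivable_pt_lim_mult x (fun s => exp (- K * s)) s _ _ (Hd s ltac:(lra)) (dexpK K s))].
    unfold dde_rhs.
    set (E := exp (- b * x (s - tau))).
    assert (HE : E <= e).
    { unfold E, e. apply exp_mono. assert (x (s - tau) <= Ahi) by (apply HM; lra). nra. }
    assert (HE0 : 0 < E) by apply exp_pos.
    assert (Hlo : Alo <= x s) by (apply Hm; lra).
    assert (HA : - A2 <= x s).
    { unfold A2. destruct (Rle_or_lt 0 Alo); [rewrite Rabs_right by lra; lra| rewrite Rabs_left by lra; lra]. }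
    assert (Hkey : (x s - x s ^ 2 * E) - K * x s > 0).
    { unfold K. assert (x s ^ 2 * E <= x s ^2 * e) by (apply Rmult_le_compat_l; nra).
      assert (x s ^ 2 <= (- x s) * A2) by (simpl; nra).
      assert (x s ^ 2 * e <= (- x s) * A2 * e) by (apply Rmult_le_compat_r; lra).
      nra. }
    nra.
Qed.

Lemma upper (b tau x0 : R) (x : R -> R)
  (hb : b <= 0) (htau : 0 <= tau) (hx0 : 0 <= x0)
  (hsol : is_dde_solution b tau x0 x) :
  forall a M, 0 <= a -> 1 <= M -> x a <= M -> forall t, a <= t -> x t <= M.
Proof.
  assert (Hpos := nonneg b tau x0 x hb htau hx0 hsol).
  destruct hsol as [Hh [Hc Hd]].
  intros a M Ha HM Hxa t Hat.
  pose (h := (fct_cte M - x)%F).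
  cut (0 <= h t). { unfold h, minus_fct, fct_cte. lra. }
  apply (barrier h a t Hat).
  - intros s _. apply continuity_pt_minus; [apply continuity_pt_const; intros ? ?; reflexivity| apply Hc].
  - unfold h, minus_fct, fct_cte. lra.
  - intros s Hs Hneg. unfold h, minus_fct, fct_cte in Hneg.
    eexists; split; [|apply (derivable_pt_lim_minus _ _ s _ _ (derivable_pt_lim_const M s) (Hd s ltac:(lra)))].
    unfold dde_rhs.
    set (E := exp (- b * x (s - tau))).
    assert (HE : 1 <= E).
    { unfold E. rewrite <- exp_0. apply exp_mono. assert (H := Hpos (s - tau)). nra. }
    simpl. nra.
Qed.

Theorem proposition1 (b tau x0 : R) (x : R -> R)
  (hb : b <= 0) (htau : 0 <= tau) (hx0 : 0 <= x0)
  (hsol : is_dde_solution b tau x0 x) :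
  (exists M : R, forall t : R, 0 <= t -> Rabs (x t) <= M) /\
  (b < 0 -> exists t0 : R, forall t : R, t0 <= t -> 0 <= x t /\ x t <= 1).
Proof.
  assert (Hpos := nonneg b tau x0 x hb htau hx0 hsol).
  assert (Hup := upper b tau x0 x hb htau hx0 hsol).
  split.
  - exists (Rmax x0 1). intros t Ht. rewrite Rabs_right by (apply Rle_ge, Hpos).
    apply (Hup 0); try lra.
    + apply Rmax_r.
    + destruct hsol as [Hh _]. rewrite Hh by lra. apply Rmax_l.
  - intros hb'.
    assert (Hex : exists t1, 0 <= t1 /\ x t1 <= 1).
    { apply NNPP. intros Hno.
      assert (Hall : forall t, 0 <= t -> 1 < x t).
      { intros t Ht. apply Rnot_le_lt. intros Hle. apply Hno. exists t. auto. }
      assert (Hx0 : 1 < x0).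
      { destruct hsol as [Hh _]. rewrite <- (Hh 0) by lra. apply Hall; lra. }
      destruct hsol as [Hh [Hc Hd]].
      set (del := exp (- b) - 1).
      assert (Hdel : 0 < del) by (unfold del; assert (H := exp_ineq1 (-b) ltac:(lra)); lra).
      set (T := x0 / del).
      assert (HT : 0 <= T) by (unfold T; apply Rmult_le_pos; [lra| left; apply Rinv_0_lt_compat; lra]).
      pose (h := ((fct_cte x0 - mult_real_fct del id) - x)%F).
      assert (H0 : 0 <= h T).
      { apply (barrier h 0 T HT).
        - intros s _. apply continuity_pt_minus; [|apply Hc].
          apply continuity_pt_minus; [apply continuity_pt_const; intros ? ?; reflexivity|].
          apply continuity_pt_scal. apply derivable_continuous_pt. apply derivable_id.
        - unfold h, minus_fct, fct_cte, mult_real_fct, id. rewrite Hh by lra. lra.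
        - intros s Hs _.
          eexists; split; [|apply (derivable_pt_lim_minus _ _ s _ _ (derivable_pt_lim_minus _ _ s _ _ (derivable_pt_lim_const x0 s) (derivable_pt_lim_scal _ del s _ (derivable_pt_lim_id s))) (Hd s ltac:(lra)))].
          unfold dde_rhs.
          assert (Hxs : 1 < x s) by (apply Hall; lra).
          assert (Hxst : 1 <= x (s - tau)).
          { destruct (Rle_or_lt (s - tau) 0). rewrite Hh by lra; lra. left; apply Hall; lra. }
          set (E := exp (- b * x (s - tau))).
          assert (HE : 1 + del <= E).
          { unfold E, del. replace (1 + (exp (-b) - 1)) with (exp (-b * 1)) by (rewrite Rmult_1_r; ring).
            apply exp_mono. nra. }
          assert (x s * x s * E >= x s * x s * (1 + del)) by (apply Rle_ge, Rmult_le_compat_l; nra).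
          assert (x s * (x s - 1) > 0) by nra.
          assert (del * (x s * x s - 1) > 0) by (apply Rmult_lt_0_compat; nra).
          simpl. nra. }
      assert (HxT := Hall T HT).
      unfold h, minus_fct, fct_cte, mult_real_fct, id in H0.
      unfold T in H0. replace (del * (x0 / del)) with x0 in H0 by (field; lra). unfold T in HxT. lra. }
    destruct Hex as [t1 [Ht1 Hxt1]].
    exists t1. intros t Ht. split; [apply Hpos|]. apply (Hup t1); lra.
Qed.
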